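(* Let $V$ be a finite set, let $d\ge 1$, let $R=(\le_1,\ldots,\le_d)$ be a $d$-representation on $V$, and let $R'=(\le_1,\ldots,\le_{d-1})$. For every $F\in\Sigma(R)\setminus\Sigma(R')$, the set $\{x\in V : x<_i \max_{\le_i}F \text{ for all } i\in\{1,\ldots,d-1\}\}$ is nonempty. Consequently the map $\psi:\Sigma(R)\setminus\Sigma(R')\to V$, $\psi(F)=\min_{\le_d}\{x\in V : x<_i\max_{\le_i}F \ \forall i\in\{1,\ldots,d-1\}\}$, is well-defined.
   Context: A $k$-representation on $V$ is a family of $k$ linear orders on $V$. For a linear order $\le$ on $V$, $x\in V$ and $F\subseteq V$, $x$ dominates $F$ in $\le$ if $f\le x$ for all $f\in F$; $x$ dominates $F$ in a representation if it dominates $F$ in at least one of its orders. For a representation $S$ on $V$, the supremum section $\Sigma(S)$ is the set of subsets $F\subseteq V$ such that every $v\in V$ dominates $F$ in $S$. When $d=1$, $R'$ has no orders and the same definition applies (the condition on $x$ is then vacuous). $<_i$ denotes the strict order associated with $\le_i$. *)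

(* Defs.v *)
From mathcomp Require Import all_boot all_order.
Set Implicit Arguments. Unset Strict Implicit. Unset Printing Implicit Defensive.

Section Defs.
Variable V : finType.

Definition linear_order (le : rel V) : Prop :=
  [/\ reflexive le, antisymmetric le, transitive le & total le].

Definition strict (le : rel V) (x y : V) : bool := le x y && (x != y).

Definition dominates_in (le : rel V) (x : V) (F : {set V}) : Prop :=
  forall f, f \in F -> le f x.

(* A k-representation is the family of orders R 0, ..., R (k-1).
   x dominates F in the representation if it dominates F in at least one order. *)
Definition dominates (k : nat) (R : nat -> rel V) (x : V) (F : {set V}) : Prop :=
  exists i, i < k /\ dominates_in (R i) x F.

Definition sup_section (k : nat) (R : nat -> rel V) (F : {set V}) : Prop :=
  forall v : V, dominates k R v F.

Definition is_max (le : rel V) (F : {set V}) (m : V) : Prop :=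
  m \in F /\ dominates_in le m F.

Definition below_maxes (k : nat) (R : nat -> rel V) (F : {set V}) (x : V) : Prop :=
  forall i, i < k -> forall m, is_max (R i) F m -> strict (R i) x m.

End Defs.

(* Main.v *)
Require Import Defs.
From mathcomp Require Import all_boot all_order.
From Stdlib Require Import Classical ClassicalEpsilon.

Definition pb (P : Prop) : bool := if excluded_middle_informative P then true else false.
Lemma pbP (P : Prop) : reflect P (pb P).
Proof. rewrite /pb; case: excluded_middle_informative => h; by constructor. Qed.

Lemma exists_min (V : finType) (le : rel V) (P : V -> Prop) :
  linear_order le -> (exists x, P x) ->
  exists! x, P x /\ forall y, P y -> le x y.
Proof.
move=> [lr las ltr lto] [x0 Px0].
pose S := [set x | pb (P x)].
have Sx0 : x0 \in S by (rewrite /S inE; apply/pbP).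
pose r x := #|[set y | le y x]|.
case: (arg_minnP r Sx0) => x Sx xmin.
have Px : P x by (have : x \in S := Sx; rewrite /S inE => /pbP).
have key : forall y, P y -> le x y.
  move=> y Py.
  case/orP: (lto x y) => // lyx.
  have Sy : y \in S by (rewrite /S inE; apply/pbP).
  have := xmin y Sy.
  case: (eqVneq x y) => [-> _|nxy]; first by apply: lr.
  move=> h; exfalso.
  have : [set z | le z y] \proper [set z | le z x].
    apply/properP; split.
      apply/subsetP => z; rewrite !inE => hz; exact: ltr hz lyx.
    exists x; rewrite !inE ?lr //.
    apply/negP => lxy; apply/negP: nxy; rewrite negbK; apply/eqP.
    by apply: las; rewrite lxy lyx.
  move/proper_card; rewrite -/(r y) -/(r x) => h2.
  by move: (leq_trans h2 h); rewrite ltnn.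
exists x; split; first by split.
move=> x' [Px' h']; apply: las; rewrite key //= h' //.
Qed.

Theorem lemma2 (V : finType) (d : nat) (R : nat -> rel V) :
  1 <= d ->
  (forall i, i < d -> linear_order (R i)) ->
  forall F : {set V},
    sup_section d R F -> ~ sup_section d.-1 R F ->
    (exists x, below_maxes d.-1 R F x) /\
    (exists! x, below_maxes d.-1 R F x /\
                forall y, below_maxes d.-1 R F y -> R d.-1 x y).
Proof.
move=> d1 lin F _ nsup.
have ex : exists x, below_maxes d.-1 R F x.
  have [v nv] := not_all_ex_not _ _ nsup.
  exists v => i ilt m [mF mmax].
  have id : i < d by apply: leq_trans ilt _; rewrite leq_pred.
  have [lr las ltr lto] := lin i id.
  have nd : ~ dominates_in (R i) v F by move=> h; apply: nv; exists i.
  have [f nf] := not_all_ex_not _ _ nd.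
  have [fF nfv] := imply_to_and _ _ nf.
  have nfv' : ~~ R i f v by apply/negP.
  have rvf : R i v f by case/orP: (lto v f) => // h; rewrite h in nfv'.
  have rfm := mmax f fF.
  rewrite /strict (ltr _ _ _ rvf rfm) /=.
  apply/eqP => evm; subst m; by rewrite rfm in nfv'.
split=> //; apply: exists_min => //.
apply: lin; by case: d d1 {nsup ex}.
Qed.
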